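(* Let $A$ be a unital Banach algebra. The following are equivalent: (i) $A$ admits a character (a nonzero multiplicative linear functional $A\to\mathbb{C}$); (ii) there exists a nonzero Banach space that is a left function module over $A$; (iii) every (nonzero) Banach space $X$ admits a left $A$-module action making it a left function module over $A$. Moreover, for any character $\varphi$ of $A$ and any Banach space $X$, the action $a\cdot x=\varphi(a)x$ makes $X$ a left function module over $A$.
   Context: A left Banach $A$-module action satisfies $1\cdot x=x$ and $\|a\cdot x\|\le\|a\|\|x\|$; $X$ is a left function module over $A$ if there exist a compact Hausdorff space $K$, a linear isometry $i\colon X\to C(K)$ and a contractive unital homomorphism $\theta\colon A\to C(K)$ with $i(a\cdot x)=\theta(a)i(x)$ for all $a,x$. *)

(* Defs.v *)
From HB Require Import structures.
From mathcomp Require Import all_boot all_order all_algebra.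
From mathcomp Require Import all_classical all_reals all_analysis.
From mathcomp Require Import complex.
Import Order.TTheory GRing.Theory Num.Theory.
Import numFieldNormedType.Exports.

Set Implicit Arguments.
Unset Strict Implicit.
Unset Printing Implicit Defensive.

Local Open Scope ring_scope.
Local Open Scope classical_set_scope.

(* The complex numbers over a real field R, seen as a numClosedFieldType
   (so that it carries its canonical normed/topological structure). *)
Definition CC (R : realType) : numClosedFieldType := R[i].

Definition supnorm (R : realType) (K : Type) (f : K -> CC R) : CC R :=
  ((sup [set complex.Re `|f k| | k in [set: K]]) +i* 0)%C.

Definition unital_banach_algebra (R : realType)
    (A : completeNormedModType (CC R)) (mul : A -> A -> A) (one : A) : Prop :=
  [/\ (forall a b c, mul a (mul b c) = mul (mul a b) c),
      (forall a, mul one a = a) /\ (forall a, mul a one = a),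
      (forall a b c, mul (a + b) c = mul a c + mul b c) /\
      (forall a b c, mul a (b + c) = mul a b + mul a c),
      (forall (k : CC R) a b, mul (k *: a) b = k *: mul a b) /\
      (forall (k : CC R) a b, mul a (k *: b) = k *: mul a b) &
      (forall a b, `|mul a b| <= `|a| * `|b|) /\
      `|one| = 1].

Definition is_character (R : realType)
    (A : completeNormedModType (CC R)) (mul : A -> A -> A)
    (phi : A -> CC R) : Prop :=
  [/\ (forall a b, phi (a + b) = phi a + phi b),
      (forall (k : CC R) a, phi (k *: a) = k * phi a),
      (forall a b, phi (mul a b) = phi a * phi b) &
      exists a, phi a != 0].

Definition left_banach_action (R : realType)
    (A : completeNormedModType (CC R)) (mul : A -> A -> A) (one : A)
    (X : completeNormedModType (CC R)) (act : A -> X -> X) : Prop :=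
  [/\ (forall x, act one x = x),
      (forall a x, `|act a x| <= `|a| * `|x|),
      (forall a b x, act (mul a b) x = act a (act b x)),
      (forall a b x, act (a + b) x = act a x + act b x) /\
      (forall (k : CC R) a x, act (k *: a) x = k *: act a x) &
      (forall a x y, act a (x + y) = act a x + act a y) /\
      (forall (k : CC R) a x, act a (k *: x) = k *: act a x)].

Definition function_module (R : realType)
    (A : completeNormedModType (CC R)) (mul : A -> A -> A) (one : A)
    (X : completeNormedModType (CC R)) (act : A -> X -> X) : Prop :=
  left_banach_action mul one act /\
  exists (K : topologicalType) (i : X -> K -> CC R) (theta : A -> K -> CC R),
    [/\ compact [set: K] /\ hausdorff_space K,
        (forall x, continuous (i x)) /\
        (forall x y k, i (x + y) k = i x k + i y k) /\
        (forall (c : CC R) x k, i (c *: x) k = c * i x k) /\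
        (forall x, `|x| = supnorm (i x)),
        (forall a, continuous (theta a)) /\
        (forall a b k, theta (a + b) k = theta a k + theta b k) /\
        (forall (c : CC R) a k, theta (c *: a) k = c * theta a k) /\
        (forall a b k, theta (mul a b) k = theta a k * theta b k) /\
        (forall k, theta one k = 1) /\
        (forall a, supnorm (theta a) <= `|a|) &
        (forall a x k, i (act a x) k = theta a k * i x k)].

(* Main.v *)
Require Import Defs.
From HB Require Import structures.
From mathcomp Require Import all_boot all_order all_algebra.
From mathcomp Require Import all_classical all_reals all_analysis.
From mathcomp Require Import complex.
From mathcomp Require Import ring lra.
Import Order.TTheory GRing.Theory Num.Theory.
Import numFieldNormedType.Exports.
Local Open Scope ring_scope.
Local Open Scope classical_set_scope.
Set Implicit Arguments. Unset Strict Implicit. Unset Printing Implicit Defensive.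
Section RC.
Variable R : realType.
Definition rc (t : R) : CC R := (t%:C)%C.
Lemma rcD a b : rc (a + b) = rc a + rc b.
Proof. by rewrite /rc; simpc. Qed.
Lemma rcM a b : rc (a * b) = rc a * rc b.
Proof. by rewrite /rc; simpc. Qed.
Lemma rcN a : rc (- a) = - rc a. Proof. by rewrite /rc; simpc. Qed.
Lemma rc_le a b : (rc a <= rc b) = (a <= b).
Proof. exact: lecR. Qed.
Lemma rc_lt a b : (rc a < rc b) = (a < b).
Proof. exact: ltcR. Qed.
Lemma rc_inj : injective rc.
Proof. by move=> a b []. Qed.
Lemma normrc a : `|rc a| = rc `|a|.
Proof. by rewrite normc_def /= expr0n /= addr0 sqrtr_sqr. Qed.
Lemma real_ge0 (z : CC R) : 0 <= z -> z = rc (complex.Re z).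
Proof. by case: z => a b; rewrite lecE /= => /andP[/eqP -> _]. Qed.
Lemma norm_rc (z : CC R) : `|z| = rc (complex.Re `|z|).
Proof. exact/real_ge0. Qed.
End RC.

Section HB.
Variables (R : realType) (X : normedModType (CC R)).
Definition rs (t : R) (x : X) : X := rc t *: x.
Definition pn (x : X) : R := complex.Re `|x|.
Lemma normE x : `|x| = rc (pn x).
Proof. exact/real_ge0. Qed.
Lemma pn_ge0 x : 0 <= pn x.
Proof. by rewrite -(rc_le 0) -normE; exact: normr_ge0. Qed.
Lemma pnD x y : pn (x + y) <= pn x + pn y.
Proof. by rewrite -rc_le rcD -!normE ler_normD. Qed.
Lemma pnZ t x : pn (rs t x) = `|t| * pn x.
Proof. by apply: rc_inj; rewrite rcM -normE normrZ normE normrc. Qed.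
Lemma pnN x : pn (- x) = pn x.
Proof. by rewrite /pn normrN. Qed.
Lemma rsD t x y : rs t (x + y) = rs t x + rs t y.
Proof. exact: scalerDr. Qed.
Lemma rsDl t s x : rs (t + s) x = rs t x + rs s x.
Proof. by rewrite /rs rcD scalerDl. Qed.
Lemma rsA t s x : rs t (rs s x) = rs (t * s) x.
Proof. by rewrite /rs rcM scalerA. Qed.
Lemma rs1 x : rs 1 x = x. Proof. exact: scale1r. Qed.
Lemma rs0 x : rs 0 x = 0. Proof. exact: scale0r. Qed.
Lemma rsx0 t : rs t 0 = 0. Proof. exact: scaler0. Qed.
Lemma rsN t x : rs (- t) x = - rs t x.
Proof. by rewrite /rs rcN scaleNr. Qed.
End HB.
Section HB2.
Variables (R : realType) (X : normedModType (CC R)).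
Implicit Types (G H : set (X * R)).
Definition good G :=
  [/\ (forall x a b, G (x,a) -> G (x,b) -> a = b),
      (forall x y a b, G (x,a) -> G (y,b) -> G (x+y, a+b)),
      (forall t x a, G (x,a) -> G (rs t x, t*a)) &
      (forall x a, G (x,a) -> a <= pn x)].

Definition G0 (x0 : X) : set (X * R) :=
  [set z | exists t, z = (rs t x0, t * pn x0)].

Lemma rs_eq0 t (x : X) : rs t x = 0 -> t = 0 \/ x = 0.
Proof.
move/eqP; rewrite /rs scaler_eq0 => /orP[/eqP|/eqP]; last by right.
by move=> h; left; apply: rc_inj; rewrite h.
Qed.

Lemma good_G0 x0 : good (G0 x0).
Proof.
split.
- move=> x a b [t [-> ->]] [s [e ->]].
  have : rs (t - s) x0 = 0 by rewrite rsDl rsN e subrr.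
  case/rs_eq0 => [/eqP|->]; first by rewrite subr_eq0 => /eqP ->.
  by rewrite /pn normr0 /= !mulr0.
- move=> x y a b [t [-> ->]] [s [-> ->]]; exists (t + s).
  by rewrite rsDl mulrDl.
- move=> t x a [s [-> ->]]; exists (t * s); by rewrite rsA mulrA.
- move=> x a [t [-> ->]]; rewrite pnZ; apply: ler_wpM2r; first exact: pn_ge0.
  exact: ler_norm.
Qed.

Lemma good_pairs G :
  (forall z1 z2, G z1 -> G z2 -> exists H, [/\ good H, H `<=` G, H z1 & H z2]) ->
  good G.
Proof.
move=> hp; split.
- move=> x a b h1 h2; have [H [[f _ _ _] _ H1 H2]] := hp _ _ h1 h2; exact: f H1 H2.
- move=> x y a b h1 h2; have [H [[_ f _ _] s H1 H2]] := hp _ _ h1 h2; exact/s/f.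
- move=> t x a h1; have [H [[_ _ f _] s H1 _]] := hp _ _ h1 h1; exact/s/f.
- move=> x a h1; have [H [[_ _ _ f] s H1 _]] := hp _ _ h1 h1; exact: f.
Qed.

Section Ext.
Variables (A : set (X * R)) (x1 : X).
Hypothesis gA : good A.
Hypothesis A00 : A (0, 0).
Hypothesis nx1 : forall a, ~ A (x1, a).

Let S := [set r | exists y g, A (y, g) /\ r = g - pn (y - x1)].
Let c := sup S.

Lemma key y g z h : A (y,g) -> A (z,h) -> g - pn (y - x1) <= pn (z + x1) - h.
Proof.
case: gA => _ add _ dom hy hz.
have := dom _ _ (add _ _ _ _ hy hz).
have : pn (y + z) <= pn (y - x1) + pn (z + x1).
  rewrite (_ : y + z = (y - x1) + (z + x1)); [exact: pnD | by rewrite addrACA addNr addr0].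
move=> h1 h2; lra.
Qed.

Lemma S_ub : has_ubound S.
Proof.
exists (pn (0 + x1) - 0) => r [y [g [hy ->]]]; exact: key hy A00.
Qed.

Lemma c_ge y g : A (y,g) -> g - pn (y - x1) <= c.
Proof. move=> hy; apply: ub_le_sup; [exact: S_ub | by exists y, g]. Qed.

Lemma c_le z h : A (z,h) -> c <= pn (z + x1) - h.
Proof.
move=> hz; apply: ge_sup; first by exists (0 - pn (0 - x1)), 0, 0.
by move=> r [y [g [hy ->]]]; exact: key hy hz.
Qed.

Definition B := [set z | exists y g t, A (y,g) /\ z = (y + rs t x1, g + t * c)].

Lemma dom_sub y g y' g' : A (y,g) -> A (y',g') -> A (y - y', g - g').
Proof.
case: gA => _ add sc _ h h'; have := sc (-1) _ _ h'.
rewrite rsN rs1 mulN1r => h''; exact: add.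
Qed.

Lemma good_B : good B.
Proof.
case: (gA) => fun_ add sc dom.
split.
- move=> x a b [y [g [t [hy [-> ->]]]]] [y' [g' [t' [hy' []]]]].
  move=> e ->.
  have ett : t = t'.
    apply/eqP; apply/negPn/negP => ne.
    have hd := dom_sub hy' hy.
    have : rs (t - t') x1 = y' - y.
      by rewrite rsDl rsN; apply/eqP; rewrite subr_eq eq_sym addrAC -e addrAC subrr add0r.
    move=> e2; have := sc ((t - t')^-1) _ _ hd; rewrite -e2 rsA mulVf ?rs1.
      exact: nx1.
    by rewrite subr_eq0.
  subst t'; have eyy : y = y' by apply: (addIr (rs t x1)).
  by subst y'; rewrite (fun_ _ _ _ hy hy').
- move=> x y' a b [y [g [t [hy [-> ->]]]]] [z [h [s [hz [-> ->]]]]].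
  exists (y + z), (g + h), (t + s); split; first exact: add.
  by congr pair; [rewrite rsDl; exact: addrACA | rewrite mulrDl; exact: addrACA].
- move=> s x a [y [g [t [hy [-> ->]]]]].
  exists (rs s y), (s * g), (s * t); split; first exact: sc.
  by congr pair; [rewrite rsD rsA | rewrite mulrDr mulrA].
- move=> x a [y [g [t [hy [-> ->]]]]].
  have [t0|tn0] := eqVneq t 0.
    by rewrite t0 rs0 addr0 mul0r addr0; exact: dom.
  have [tp|tn] := ltrP 0 t.
    have hy2 := sc (t^-1) _ _ hy.
    have := c_le hy2; move/(ler_wpM2l (ltW tp)).
    rewrite mulrBr mulrA mulfV // mul1r -[t in t * pn _]ger0_norm ?(ltW tp) //.
    rewrite -pnZ rsD rsA mulfV // rs1 => h; lra.
  have tn' : t < 0 by rewrite lt_neqAle tn0 tn.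
  set s := - t.
  have sp : 0 < s by rewrite /s oppr_gt0.
  have hy2 := sc (s^-1) _ _ hy.
  have := c_ge hy2; move/(ler_wpM2l (ltW sp)).
  rewrite mulrBr mulrA mulfV ?gt_eqF // mul1r -[s in s * pn _]ger0_norm ?(ltW sp) //.
  rewrite -pnZ rsD rsA mulfV ?gt_eqF // rs1.
  have -> : rs s (- x1) = rs t x1 by rewrite /rs scalerN -scaleNr -rcN opprK.
  rewrite /s mulNr => h; lra.
Qed.

Lemma A_B : A `<` B.
Proof.
split.
  move=> [y g] hy; exists y, g, 0; split => //.
  by rewrite rs0 addr0 mul0r addr0.
move=> hBA.
have h : B (x1, c) by exists 0, 0, 1; split => //; rewrite rs1 add0r mul1r add0r.
exact: (nx1 (hBA _ h)).
Qed.
End Ext.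

Lemma real_hb (x0 : X) : exists f : X -> R,
  [/\ (forall x y, f (x + y) = f x + f y),
      (forall t x, f (rs t x) = t * f x),
      (forall x, f x <= pn x) & f x0 = pn x0].
Proof.
pose P := [set G | good (G `|` G0 x0)].
have [A [PA maxA]] : exists A : set (X * R), P A /\ (forall B, A `<` B -> ~ P B).
  apply: Zorn_bigcup => F FP tot; rewrite /P /=.
  apply: good_pairs => z1 z2.
  have gen : forall z, (\bigcup_(X0 in F) X0 `|` G0 x0) z ->
      G0 x0 z \/ exists2 H, F H & H z.
    move=> z [[H FH Hz]|]; [by right; exists H | by left].
  move=> /gen h1 /gen h2.
  have sub : forall H, F H -> H `|` G0 x0 `<=` \bigcup_(X0 in F) X0 `|` G0 x0.
    move=> H FH z [Hz|Gz]; [by left; exists H | by right].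
  case: h1 => [g1|[H1 F1 H1z]]; case: h2 => [g2|[H2 F2 H2z]].
  - exists (G0 x0); split; [exact: good_G0 | by move=> z; right | by [] | by []].
  - exists (H2 `|` G0 x0); split; [exact: FP | exact: sub | by right | by left].
  - exists (H1 `|` G0 x0); split; [exact: FP | exact: sub | by left | by right].
  - case: (tot _ _ F1 F2) => [s12|s21].
    + exists (H2 `|` G0 x0); split; [exact: FP | exact: sub | by left; apply: s12 | by left].
    + exists (H1 `|` G0 x0); split; [exact: FP | exact: sub | by left | by left; apply: s21].
have G0A : G0 x0 `<=` A.
  apply: contrapT => nsub; apply: (maxA (A `|` G0 x0)).
    split; first by move=> z Az; left.
    by move=> h; apply: nsub => z Gz; apply: h; right.
  by rewrite /P /= -setUA setUid.
have gA : good A.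
  have e : A `|` G0 x0 = A by apply/setUidPl.
  by rewrite -e.
have A00 : A (0, 0).
  apply: G0A; exists 0; by rewrite rs0 mul0r.
have tot : forall x, exists a, A (x, a).
  move=> x; apply: contrapT => nex.
  have nx : forall a, ~ A (x, a) by move=> a h; apply: nex; exists a.
  have PB : P (B A x).
    rewrite /P /=.
    have -> : B A x `|` G0 x0 = B A x.
      apply/setUidPl => z Gz; have [hs _] := A_B A00 nx; exact/hs/G0A.
    exact: good_B gA A00 nx.
  exact: (maxA _ (A_B A00 nx) PB).
pose f x := projT1 (cid (tot x)).
have fA : forall x, A (x, f x) by move=> x; exact: projT2 (cid (tot x)).
case: gA => fun_ add sc dom.
exists f; split.
- move=> x y; apply: (fun_ (x + y)); [exact: fA | exact: add].
- move=> t x; apply: (fun_ (rs t x)); [exact: fA | exact: sc].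
- move=> x; exact: dom.
- apply: (fun_ x0); first exact: fA.
  by apply: G0A; exists 1; rewrite rs1 mul1r.
Qed.
End HB2.
Section CX.
Variables (R : realType) (X : normedModType (CC R)).
Local Notation ii := ('i%C : CC R).

Lemma ii2 : ii * ii = -1.
Proof. by rewrite -expr2 sqr_i. Qed.

Lemma cdecomp (k : CC R) : k = rc (complex.Re k) + ii * rc (complex.Im k).
Proof. by case: k => a b; rewrite /rc; simpc. Qed.

Definition cxf (g : X -> R) (x : X) : CC R := rc (g x) - ii * rc (g (ii *: x)).

Variable g : X -> R.
Hypothesis gD : forall x y, g (x + y) = g x + g y.
Hypothesis gZ : forall t x, g (rs t x) = t * g x.
Hypothesis gle : forall x, g x <= pn x.

Lemma gN x : g (- x) = - g x.
Proof. by have := gZ (-1) x; rewrite rsN rs1 mulN1r. Qed.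

Lemma cxfD x y : cxf g (x + y) = cxf g x + cxf g y.
Proof. by rewrite /cxf scalerDr !gD !rcD; ring. Qed.

Lemma cxfZ (k : CC R) x : cxf g (k *: x) = k * cxf g x.
Proof.
have fk : forall a b x, g ((rc a + ii * rc b) *: x) = a * g x + b * g (ii *: x).
  move=> a b y; rewrite scalerDl [ii * _]mulrC -scalerA gD.
  by rewrite (gZ a y) (gZ b (ii *: y)).
rewrite (cdecomp k); set a := complex.Re k; set b := complex.Im k.
have e1 : forall (k' : CC R) (y : X), ii *: (k' *: y) = k' *: (ii *: y).
  by move=> k' y; rewrite !scalerA mulrC.
rewrite /cxf e1 !fk scalerA ii2 scaleN1r gN.
rewrite !rcD !rcM !rcN.
have h := ii2; set i := ii in h *.
have E : forall l r d : CC R, l - r = d * (1 + i * i) -> l = r.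
  by move=> l r d e; apply/eqP; rewrite -subr_eq0 e h subrr mulr0.
apply: (E _ _ (rc b * rc (g (i *: x)))); ring.
Qed.

Lemma Re_cxf x : complex.Re (cxf g x) = g x.
Proof. by rewrite /cxf /rc; simpc. Qed.

Lemma cxf_le x : `|cxf g x| <= `|x|.
Proof.
have [z0|nz] := eqVneq (cxf g x) 0; first by rewrite z0 normr0.
pose k := (cxf g x)^*%C / `|cxf g x|.
have hk : k * cxf g x = `|cxf g x|.
  rewrite /k mulrAC -[X in X / _]mulrC -sqr_normc expr2 -mulrA mulfV ?mulr1 //.
  by rewrite normr_eq0.
have nk : `|k| = 1.
  by rewrite /k normrM normfV normcJ normr_id mulfV // normr_eq0.
have e : `|cxf g x| = rc (g (k *: x)).
  by rewrite -Re_cxf cxfZ hk -norm_rc.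
rewrite e; apply: le_trans (_ : rc (pn (k *: x)) <= _).
  by rewrite rc_le.
by rewrite -normE normrZ nk mul1r.
Qed.

Lemma cxf_ge x : g x <= complex.Re `|cxf g x|.
Proof.
have := normc_ge_Re (cxf g x); rewrite (norm_rc (cxf g x)) Re_cxf.
rewrite /rc lecR => h; apply: le_trans h; exact: ler_norm.
Qed.
End CX.
Section Neumann.
Variables (R : realType) (A : completeNormedModType (CC R)) (mul : A -> A -> A) (one : A).
Hypothesis hA : unital_banach_algebra mul one.

Lemma mulNl a c : mul (- a) c = - mul a c.
Proof. by case: hA => _ _ _ [hl _] _; rewrite -scaleN1r hl scaleN1r. Qed.
Lemma mulNr a c : mul a (- c) = - mul a c.
Proof. by case: hA => _ _ _ [_ hr] _; rewrite -scaleN1r hr scaleN1r. Qed.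
Lemma mulDl a c d : mul (a + c) d = mul a d + mul c d.
Proof. by case: hA => _ _ [h _] _ _; apply: h. Qed.
Lemma mulDr a c d : mul a (c + d) = mul a c + mul a d.
Proof. by case: hA => _ _ [_ h] _ _; apply: h. Qed.
Lemma mul1l a : mul one a = a.
Proof. by case: hA => _ [h _] _ _ _; apply: h. Qed.
Lemma mul0r' a : mul a 0 = 0.
Proof. by case: hA => _ _ _ [_ h] _; have := h 0 a 0; rewrite !scale0r. Qed.
Lemma pn_mul a c : pn (mul a c) <= pn a * pn c.
Proof. by case: hA => _ _ _ _ [h _]; rewrite -rc_le rcM -!normE. Qed.
Lemma pn_one : pn one = 1.
Proof. by case: hA => _ _ _ _ [_ h]; rewrite /pn h. Qed.

Variable b : A.
Hypothesis hb : pn b < 1.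
Definition pw n := iter n (mul b) one.
Definition Sn n := \sum_(k < n) pw k.
Let r := pn b.
Lemma r_ge0 : 0 <= r. Proof. exact: pn_ge0. Qed.

Lemma pw_norm n : pn (pw n) <= r ^+ n.
Proof.
elim: n => [|n IH]; first by rewrite /pw /= pn_one expr0.
rewrite /pw iterS -/(pw n) exprS.
apply: le_trans (pn_mul _ _) _; apply: ler_wpM2l; [exact: r_ge0 | exact: IH].
Qed.

Lemma mulS n : mul (one - b) (Sn n) = one - pw n.
Proof.
elim: n => [|n IH].
  by rewrite /Sn big_ord0 mul0r' /pw /= subrr.
rewrite /Sn big_ord_recr /= -/(Sn n) mulDr IH mulDl mul1l mulNl.
by rewrite addrA subrK.
Qed.

Lemma tail_bound m n : (m <= n)%N -> pn (\sum_(m <= k < n) pw k) * (1 - r) <= r ^+ m.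
Proof.
move=> mn.
have h1 : pn (\sum_(m <= k < n) pw k) <= \sum_(m <= k < n) r ^+ k.
  elim: n mn => [|n IH] mn.
    by move: mn; rewrite leqn0 => /eqP ->; rewrite !big_geq // /pn normr0.
  move: mn; rewrite leq_eqVlt => /orP[/eqP ->|mn]; first by rewrite !big_geq // /pn normr0.
  rewrite !big_nat_recr //=; apply: le_trans (pnD _ _) _; apply: lerD; first exact: IH.
  exact: pw_norm.
have h2 : (\sum_(m <= k < n) r ^+ k) * (1 - r) = r ^+ m - r ^+ n.
  rewrite mulr_suml.
  have -> : \sum_(m <= i < n) r ^+ i * (1 - r) = \sum_(m <= i < n) (r ^+ i - r ^+ i.+1).
    by apply: eq_bigr => i _; rewrite exprS; ring.
  have -> : \sum_(m <= i < n) (r ^+ i - r ^+ i.+1) = - \sum_(m <= i < n) (r ^+ i.+1 - r ^+ i).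
    by rewrite -sumrN; apply: eq_bigr => i _; rewrite opprB.
  by rewrite (telescope_sumr (fun k => r ^+ k) mn) opprB.
have rn := exprn_ge0 n r_ge0.
apply: le_trans (_ : (\sum_(m <= k < n) r ^+ k) * (1 - r) <= _).
  by apply: ler_wpM2r; [rewrite subr_ge0 ltW | exact: h1].
by rewrite h2; lra.
Qed.

Lemma Sn_sub m n : (m <= n)%N -> Sn n - Sn m = \sum_(m <= k < n) pw k.
Proof.
move=> mn; rewrite /Sn -!(big_mkord xpredT) (big_cat_nat (leq0n m) mn) /=.
by rewrite addrAC subrr add0r.
Qed.

Lemma exN e : 0 < e -> exists N, r ^+ N < e.
Proof.
move=> he; have : `|r| < 1 by rewrite ger0_norm //; exact: r_ge0.
move/cvg_expr/cvgr_dist_lt/(_ e he) => [N _ hN]; exists N.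
have := hN N (leqnn N); rewrite sub0r normrN ger0_norm //.
exact: exprn_ge0 r_ge0.
Qed.

Lemma pos_real (e : CC R) : 0 < e -> 0 < complex.Re e /\ e = rc (complex.Re e).
Proof.
move=> he; have e1 := real_ge0 (ltW he); split => //.
by rewrite -rc_lt -e1.
Qed.

Lemma Sn_cvg : cvg (Sn @ \oo).
Proof.
apply/cauchy_cvgP; apply/cauchyP => e he.
have [he' e1] := pos_real he.
have r1 : 0 < 1 - r by rewrite subr_gt0.
have [N hN] := exN (mulr_gt0 he' r1).
exists (Sn N); exists N => // n /= hn.
rewrite -ball_normE /= -opprB normrN Sn_sub // normE e1 rc_lt.
have := tail_bound hn; move=> h.
have : pn (\sum_(N <= k < n) pw k) * (1 - r) < complex.Re e * (1 - r) by exact: le_lt_trans h hN.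
by rewrite ltr_pM2r.
Qed.

Lemma inv_exists : exists c, mul (one - b) c = one.
Proof.
have hc := Sn_cvg; set c := lim _ in hc.
exists c; apply/eqP; rewrite -subr_eq0 -normr_eq0 normE.
set d := one - b; set v := pn _.
have key : forall e, 0 < e -> v <= (pn d + 1) * e.
  move=> e he.
  have hep : 0 < rc e by rewrite (_ : 0 = rc 0) // rc_lt.
  have [N1 _ hN1] := cvgr_dist_lt _ _ hc _ hep.
  have [N2 hN2] := exN he.
  pose n := maxn N1 N2.
  have a1 : pn (c - Sn n) < e.
    by rewrite -rc_lt -normE; apply: hN1; rewrite /= leq_maxl.
  have a2 : r ^+ n <= r ^+ N2.
    exact: (ler_wiXn2l r_ge0 (ltW hb) (leq_maxr _ _)).
  have e2 : mul d c - one = mul d (c - Sn n) - pw n.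
    by rewrite mulDr mulNr mulS opprB addrA addrAC addrK.
  rewrite /v e2; apply: le_trans (pnD _ _) _; rewrite pnN.
  have := pn_mul d (c - Sn n); have := pw_norm n; have := pn_ge0 d; have := pn_ge0 (c - Sn n).
  move=> p1 p2 p3 p4; nra.
have v0 : 0 <= v by exact: pn_ge0.
have D0 : 0 <= pn d by exact: pn_ge0.
have : v <= 0.
  apply/negPn/negP; rewrite -ltNge => vp.
  have hD : 0 < pn d + 1 by lra.
  have hp : 0 < v / (2 * (pn d + 1)) by apply: divr_gt0 => //; lra.
  have := key _ hp.
  have -> : (pn d + 1) * (v / (2 * (pn d + 1))) = v / 2.
    by field; rewrite gt_eqF.
  lra.
move=> h; have v00 : v = 0 by apply/le_anti; rewrite h v0.
by rewrite v00.
Qed.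
End Neumann.
Section Char.
Variables (R : realType) (A : completeNormedModType (CC R)) (mul : A -> A -> A) (one : A).
Hypothesis hA : unital_banach_algebra mul one.
Variable phi : A -> CC R.
Hypothesis hphi : is_character mul phi.

Lemma phi_one : phi one = 1.
Proof.
case: hphi => _ _ hm [a na].
apply: (mulIf na); rewrite mul1r -hm; congr phi; exact: mul1l.
Qed.

Lemma phiN x : phi (- x) = - phi x.
Proof. by case: hphi => _ hz _ _; rewrite -scaleN1r hz mulN1r. Qed.
Lemma phiB x y : phi (x - y) = phi x - phi y.
Proof. by case: hphi => hd _ _ _; rewrite hd phiN. Qed.

Lemma rcV (m : R) : m != 0 -> rc (m^-1) = (rc m)^-1.
Proof.
move=> nz; have nz' : rc m != 0 by apply/eqP => /rc_inj /eqP; rewrite (negbTE nz).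
by apply: (mulIf nz'); rewrite mulVf // -rcM mulVf.
Qed.

Lemma phi_bound a : `|phi a| <= `|a|.
Proof.
rewrite (norm_rc (phi a)) (normE a) rc_le.
set m := complex.Re _.
rewrite leNgt; apply/negP => hlt.
have pa0 := pn_ge0 a.
have m0 : 0 < m by lra.
have lz : phi a != 0.
  apply/eqP => e; move: m0; rewrite /m e normr0 /=; lra.
pose b := (phi a)^-1 *: a.
have hb : pn b < 1.
  have e1 : `|b| = rc (pn a / m).
    rewrite /b normrZ normfV (norm_rc (phi a)) -/m normE rcM rcV ?gt_eqF //.
    by rewrite mulrC.
  rewrite /pn e1 /=; rewrite ltr_pdivrMr //; lra.
have [c hc] := inv_exists hA hb.
case: hphi => hd hz hm _.
have : phi (mul (one - b) c) = 1 by rewrite hc phi_one.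
rewrite hm phiB phi_one /b hz mulVf // subrr mul0r.
by move/eqP; rewrite eq_sym oner_eq0.
Qed.
End Char.
Section SetType.
Variables (T : topologicalType) (A : set T).

Lemma sv_cont : continuous (set_val : set_type A -> T).
Proof. exact: (@initial_continuous (set_type A) T set_val). Qed.

Lemma nbhs_set_type (k : set_type A) (V : set (set_type A)) :
  nbhs k V -> exists W, nbhs (set_val k) W /\ set_val @^-1` W `<=` V.
Proof.
rewrite nbhsE => -[B [oB Bk] BV].
case: oB => W oW eW.
exists W; split; last by rewrite eW.
exists W => //; split => //; by rewrite -eW in Bk.
Qed.

Lemma set_type_compact : compact A -> compact [set: set_type A].
Proof.
move=> cA F PF _.
pose G := set_val @ F.
have PG : ProperFilter G by exact: fmap_proper_filter.
have GA : G A by rewrite /G /=; apply: filterS (filterT); move=> [x xA] _; exact: set_mem xA.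
have [x [Ax clx]] := cA G PG GA.
exists (SigSub (mem_set Ax)); split => //.
move=> U V FU /nbhs_set_type [W [nW WV]].
have GU : G (set_val @` U) by rewrite /G /=; apply: filterS FU => u Uu; exists u.
have [y [[u Uu <-] Wu]] := clx _ _ GU nW.
by exists u; split => //; apply: WV.
Qed.

Lemma set_type_hausdorff : hausdorff_space T -> hausdorff_space (set_type A).
Proof.
move=> hT p q clpq; apply: val_inj; apply: hT.
move=> U V nU nV.
have nU' : nbhs p (set_val @^-1` U) by exact: sv_cont.
have nV' : nbhs q (set_val @^-1` V) by exact: sv_cont.
have [r [Ur Vr]] := clpq _ _ nU' nV'.
by exists (set_val r).
Qed.
End SetType.
Section KT.
Variables (R : realType).
Definition PT (X : Type) := {ptws X -> R}.
Variable X : choiceType.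
Lemma projc (x : X) : continuous (fun g : PT X => g x).
Proof. exact: (@proj_continuous X (fun _ => R) x). Qed.
Lemma PT_haus : hausdorff_space (PT X).
Proof. apply: (@hausdorff_product X (fun _ => R)) => _. exact: norm_hausdorff. Qed.
Lemma tych (f : X -> R) : compact [set g : PT X | forall x, `[- f x, f x] (g x)].
Proof. apply: (@tychonoff X (fun _ => R) (fun x => `[- f x, f x])) => x. exact: segment_compact. Qed.
End KT.
Section FM.
Variables (R : realType) (X : normedModType (CC R)).
Local Notation ii := ('i%C : CC R).

Lemma rc_cont : continuous (@rc R).
Proof.
move=> x; apply/cvgrPdist_lt => e he.
have [he' e1] := pos_real he.
near=> y.
rewrite -rcN -rcD normrc e1 rc_lt.
near: y.
exact: (cvgr_dist_lt (fun y : R => y) x (@cvg_id _ (nbhs x)) _ he').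
Unshelve. all: by end_near.
Qed.

Definition KR : set (PT R X) :=
  [set g | [/\ forall x y, g (x + y) = g x + g y,
               forall t x, g (rs t x) = t * g x &
               forall x, g x <= pn x]].

Lemma closed_eqf (f1 f2 : PT R X -> R) :
  continuous f1 -> continuous f2 -> closed [set g | f1 g = f2 g].
Proof.
move=> c1 c2.
have -> : [set g | f1 g = f2 g] = (fun g => f1 g - f2 g) @^-1` [set z | z = 0].
  rewrite predeqE => g /=; split => [->|]; first exact: subrr.
  by move/eqP; rewrite subr_eq0 => /eqP.
apply: preimage_closed; last exact: closed_eq.
move=> g _; apply: continuousB; [exact: c1 | exact: c2].
Qed.

Lemma closed_lef (f1 : PT R X -> R) c :
  continuous f1 -> closed [set g | f1 g <= c].
Proof.
move=> c1; have -> : [set g | f1 g <= c] = f1 @^-1` [set z | z <= c] by [].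
apply: preimage_closed; last exact: closed_le.
by move=> g _; exact: c1.
Qed.

Lemma cmul_cont (t : R) (f1 : PT R X -> R) : continuous f1 -> continuous (fun g => t * f1 g).
Proof. move=> c1 g; apply: continuousM; [exact: cst_continuous | exact: c1]. Qed.

Lemma KR_closed : closed KR.
Proof.
have -> : KR = (\bigcap_(p in [set: X * X]) [set g : PT R X | g (p.1 + p.2) = g p.1 + g p.2])
   `&` (\bigcap_(q in [set: R * X]) [set g : PT R X | g (rs q.1 q.2) = q.1 * g q.2])
   `&` (\bigcap_(x in [set: X]) [set g : PT R X | g x <= pn x]).
  rewrite predeqE => g; split.
    case=> h1 h2 h3; split; first split.
    - by move=> [x y] _; exact: h1.
    - by move=> [t x] _; exact: h2.
    - by move=> x _; exact: h3.
  move=> [[h1 h2] h3]; split.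
  - by move=> x y; exact: (h1 (x, y)).
  - by move=> t x; exact: (h2 (t, x)).
  - by move=> x; exact: (h3 x).
apply: closedI; first apply: closedI.
- apply: closed_bigI => -[x y] _; apply: closed_eqf; first exact: projc.
  by move=> g; apply: continuousD; exact: projc.
- apply: closed_bigI => -[t x] _; apply: closed_eqf; first exact: projc.
  by apply: cmul_cont; exact: projc.
- apply: closed_bigI => x _; apply: closed_lef; exact: projc.
Qed.

Lemma KR_compact : compact KR.
Proof.
have T1 := tych (f := @pn R X).
have T2 := KR_closed.
apply: (subclosed_compact T2 T1).
move=> g [h1 h2 h3] x /=; rewrite in_itv /=; apply/andP; split; last exact: h3.
have := h3 (- x); rewrite pnN.
have := h2 (-1) x; rewrite rsN rs1 mulN1r => ->.
by rewrite lerNl.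
Qed.

Definition KT := set_type KR.

Lemma KT_compact : compact [set: KT].
Proof. exact: set_type_compact KR_compact. Qed.

Lemma KT_haus : hausdorff_space KT.
Proof. apply: set_type_hausdorff; exact: PT_haus. Qed.

Definition iota (x : X) (k : KT) : CC R := cxf (set_val k : PT R X) x.

Lemma kprops (k : KT) : KR (set_val k).
Proof. exact: set_valP. Qed.

Lemma eval_cont (y : X) : continuous (fun k : KT => (set_val k : PT R X) y).
Proof.
move=> k; apply: (@continuous_comp _ _ _ set_val (fun g : PT R X => g y)).
  exact: sv_cont.
exact: projc.
Qed.

Lemma iota_cont x : continuous (iota x).
Proof.
have c1 : forall y, continuous (fun k : KT => rc ((set_val k : PT R X) y)).
  move=> y k.
  apply: (@continuous_comp _ _ _ (fun k : KT => (set_val k : PT R X) y) (@rc R)).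
    exact: eval_cont.
  exact: rc_cont.
have c2 : continuous (fun k : KT => ii * rc ((set_val k : PT R X) (ii *: x))).
  have c0 : continuous (fun _ : KT => ii) by move=> k; exact: cst_continuous.
  move=> k; exact: (continuousM (c0 k) (c1 _ k)).
move=> k; exact: (continuousB (c1 x k) (c2 k)).
Qed.

Lemma iotaD x y k : iota (x + y) k = iota x k + iota y k.
Proof. by case: (kprops k) => h1 h2 h3; rewrite /iota cxfD. Qed.

Lemma iotaZ (c : CC R) x k : iota (c *: x) k = c * iota x k.
Proof. by case: (kprops k) => h1 h2 h3; rewrite /iota cxfZ. Qed.

Lemma iota_le x k : complex.Re `|iota x k| <= pn x.
Proof.
case: (kprops k) => h1 h2 h3.
have := cxf_le h1 h2 h3 x; rewrite (norm_rc (cxf _ x)) (normE x) rc_le //.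
Qed.

Lemma iota_iso x : `|x| = supnorm (iota x).
Proof.
rewrite /supnorm (normE x) /rc; congr (_ +i* _)%C.
have [f [fD fZ fle fx]] := real_hb x.
have Kf : KR (f : PT R X) by split.
pose k0 : KT := SigSub (mem_set Kf).
have hk0 : pn x <= complex.Re `|iota x k0|.
  rewrite -fx; change (f x <= complex.Re `|cxf f x|); exact: cxf_ge.
apply/le_anti/andP; split.
  apply: le_trans hk0 _; apply: ub_le_sup; last by exists k0.
  by exists (pn x) => _ [k _ <-]; exact: iota_le.
apply: ge_sup; first by exists (complex.Re `|iota x k0|), k0.
by move=> _ [k _ <-]; exact: iota_le.
Qed.

Lemma KT_inhabited : exists k : KT, True.
Proof.
have [f [fD fZ fle _]] := real_hb (0 : X).
have Kf : KR (f : PT R X) by split.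
by exists (SigSub (mem_set Kf)).
Qed.
End FM.
Lemma fm_char (R : realType) (A : completeNormedModType (CC R))
    (mul : A -> A -> A) (one : A) (hA : unital_banach_algebra mul one)
    (phi : A -> CC R) (hphi : is_character mul phi)
    (X : completeNormedModType (CC R)) :
  function_module mul one (fun (a : A) (x : X) => phi a *: x).
Proof.
have p1 := phi_one hA hphi.
have pb := phi_bound hA hphi.
case: (hphi) => hd hz hm _.
split.
  split.
  - by move=> x; rewrite p1 scale1r.
  - move=> a x; rewrite normrZ; apply: ler_wpM2r; [exact: normr_ge0 | exact: pb].
  - by move=> a b x; rewrite hm scalerA.
  - split; [by move=> a b x; rewrite hd scalerDl | by move=> k a x; rewrite hz scalerA].
  - split; [by move=> a x y; exact: scalerDr | by move=> k a x; rewrite !scalerA mulrC].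
exists (@KT R X), (@iota R X), (fun a (_ : @KT R X) => phi a).
split.
- split; [exact: KT_compact | exact: KT_haus].
- split; first exact: iota_cont.
  split; first by move=> *; exact: iotaD.
  split; first by move=> *; exact: iotaZ.
  exact: iota_iso.
- split; first by move=> a k; exact: cst_continuous.
  split; first by move=> *; exact: hd.
  split; first by move=> *; exact: hz.
  split; first by move=> *; exact: hm.
  split; first by move=> k; exact: p1.
  move=> a; rewrite /supnorm.
  have [k0 _] := @KT_inhabited R X.
  have -> : [set complex.Re `|phi a| | _ in [set: @KT R X]] = [set complex.Re `|phi a|].
    rewrite predeqE => r; split => [[k _ <-] // | ->]; by exists k0.
  rewrite sup1; have := pb a; rewrite (norm_rc (phi a)); exact.
- move=> a x k; exact: iotaZ.
Qed.

Unset Implicit Arguments.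

Theorem mainTheorem6 (R : realType) (A : completeNormedModType (CC R))
    (mul : A -> A -> A) (one : A) :
  unital_banach_algebra mul one ->
  [/\ (exists phi : A -> CC R, is_character mul phi) <->
        (exists (X : completeNormedModType (CC R)),
           (exists x : X, x != 0) /\
           exists act : A -> X -> X, function_module mul one act),
      (exists phi : A -> CC R, is_character mul phi) <->
        (forall (X : completeNormedModType (CC R)),
           (exists x : X, x != 0) ->
           exists act : A -> X -> X, function_module mul one act) &
      forall (phi : A -> CC R), is_character mul phi ->
        forall (X : completeNormedModType (CC R)),
          function_module mul one (fun (a : A) (x : X) => phi a *: x)].
Proof.
move=> hA.
have one0 : exists x : A, x != 0.
  exists one; apply/eqP => e; case: hA => _ _ _ _ [_ h]; move: h.
  by rewrite e normr0 => /eqP; rewrite eq_sym oner_eq0.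
have ii_i : (exists (X : completeNormedModType (CC R)),
           (exists x : X, x != 0) /\
           exists act : A -> X -> X, function_module mul one act) ->
     exists phi : A -> CC R, is_character mul phi.
  case=> X [[x nx] [act [_ [K [i [theta [_ [_ [_ [_ iso]]] [_ [thD [thZ [thM [th1 _]]]]] _]]]]]]].
  have [k0 _] : exists k : K, True.
    apply: contrapT => nk.
    have e : [set complex.Re `|i x k| | k in [set: K]] = set0.
      rewrite predeqE => r; split => // -[k _ _]; apply: nk; by exists k.
    move: (iso x); rewrite /supnorm e sup0 => h.
    by move: nx; rewrite -normr_eq0 h eqxx.
  exists (fun a => theta a k0); split.
  - by move=> a b; exact: thD.
  - by move=> k a; exact: thZ.
  - by move=> a b; exact: thM.
  - by exists one; rewrite th1 oner_eq0.
split.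
- split; last exact: ii_i.
  case=> phi hphi; exists A; split => //.
  by exists (fun a x => phi a *: x); exact: fm_char.
- split.
    case=> phi hphi X _.
    by exists (fun a x => phi a *: x); exact: fm_char.
  move=> h; apply: ii_i; exists A; split => //; exact: h.
- move=> phi hphi X; exact: fm_char.
Qed.
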